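(* There exists a constant $c>0$ such that for all sufficiently large $n$ and all $r\ge0$, $0<\epsilon\le 1$, $R>\epsilon$, with probability at least $1-1/n$ the flooding time of the stationary geometric-MEG $\mathcal{G}(n,r,R,\epsilon)$ is at least $c\,\frac{\sqrt n}{R+r}$.
   Context: $L_{n,\epsilon}=\{(i\epsilon,j\epsilon): i,j\in\mathbb{N},\ i,j\le\sqrt n/\epsilon\}$; $\Gamma(\mathbf{x})=\{\mathbf{y}\in L_{n,\epsilon}:d(\mathbf{x},\mathbf{y})\le r\}$ with $d$ Euclidean distance. Each node $i\in[n]$ has position $P_{i,t}\in L_{n,\epsilon}$ evolving independently as a Markov chain that moves from $\mathbf{x}$ to a uniform random point of $\Gamma(\mathbf{x})$. The geometric-MEG $\mathcal{G}(n,r,R,\epsilon)=\{G_t\}$ has $G_t=([n],E_t)$, $E_t=\{\{i,j\}: d(P_{i,t},P_{j,t})\le R\}$. It is stationary when the initial positions are independent with law $\pi(\mathbf{x})=|\Gamma(\mathbf{x})|/\sum_{\mathbf{y}}|\Gamma(\mathbf{y})|$. Flooding from source $s$: $I_0=\{s\}$, $I_{t+1}=I_t\cup N_t(I_t)$, where $N_t(I)$ is the set of nodes outside $I$ adjacent in $G_t$ to a node of $I$; $T(s)$ is the first $t$ with $I_t=[n]$, and the flooding time is $\max_s T(s)$. *)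

(* Defs.v *)
From Stdlib Require Import Reals List Arith ZArith Bool.
Open Scope bool_scope.
Import ListNotations.
Open Scope R_scope.

(** Lattice points (i*eps, j*eps) are represented by index pairs (i,j). *)
Definition point : Type := (nat * nat)%type.

Definition pt_eqb (p q : point) : bool :=
  Nat.eqb (fst p) (fst q) && Nat.eqb (snd p) (snd q).

Definition dist_pt (eps : R) (p q : point) : R :=
  sqrt ((INR (fst p) * eps - INR (fst q) * eps) ^ 2 +
        (INR (snd p) * eps - INR (snd q) * eps) ^ 2).

Definition Rleb (a b : R) : bool := if Rle_dec a b then true else false.
Definition Rltb (a b : R) : bool := if Rlt_dec a b then true else false.

(** L_{n,eps} = {(i eps, j eps) : i,j in N, i,j <= sqrt n / eps} *)
Definition lat_bound (n : nat) (eps : R) : R := sqrt (INR n) / eps.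

Definition lattice (n : nat) (eps : R) : list point :=
  let N := (Z.to_nat (up (lat_bound n eps)) + 1)%nat in
  let idx := filter (fun i => Rleb (INR i) (lat_bound n eps)) (seq 0 N) in
  list_prod idx idx.

Definition Gamma (n : nat) (r eps : R) (x : point) : list point :=
  filter (fun y => Rleb (dist_pt eps x y) r) (lattice n eps).

Definition trans (n : nat) (r eps : R) (x y : point) : R :=
  if existsb (pt_eqb y) (Gamma n r eps x)
  then / INR (length (Gamma n r eps x)) else 0.

Definition Rsum (l : list R) : R := fold_right Rplus 0 l.
Definition Rprod (l : list R) : R := fold_right Rmult 1 l.

Definition pi_stat (n : nat) (r eps : R) (x : point) : R :=
  INR (length (Gamma n r eps x)) /
  Rsum (map (fun y => INR (length (Gamma n r eps y))) (lattice n eps)).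

(** A configuration lists the positions of nodes 0..n-1. *)
Definition config : Type := list point.
Definition dpt : point := (0%nat, 0%nat).

Fixpoint all_lists {A : Type} (l : list A) (m : nat) : list (list A) :=
  match m with
  | O => [[]]
  | S m' => flat_map (fun a => map (cons a) (all_lists l m')) l
  end.

Definition init_weight (n : nat) (r eps : R) (c : config) : R :=
  Rprod (map (fun i => pi_stat n r eps (nth i c dpt)) (seq 0 n)).

Definition step_weight (n : nat) (r eps : R) (c c' : config) : R :=
  Rprod (map (fun i => trans n r eps (nth i c dpt) (nth i c' dpt)) (seq 0 n)).

Fixpoint chain_weight (n : nat) (r eps : R) (c : config) (rest : list config) : R :=
  match rest with
  | [] => 1
  | c' :: rest' => step_weight n r eps c c' * chain_weight n r eps c' rest'
  end.

(** Probability of the trajectory (P_{.,0}, ..., P_{.,H-1}) of the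
    stationary process (independent nodes, stationary initial law). *)
Definition traj_weight (n : nat) (r eps : R) (traj : list config) : R :=
  match traj with
  | [] => 1
  | c :: rest => init_weight n r eps c * chain_weight n r eps c rest
  end.

Definition prob (n : nat) (r eps : R) (H : nat) (E : list config -> bool) : R :=
  Rsum (map (traj_weight n r eps)
            (filter E (all_lists (all_lists (lattice n eps) n) H))).

Definition adj (Rr eps : R) (c : config) (i j : nat) : bool :=
  Rleb (dist_pt eps (nth i c dpt) (nth j c dpt)) Rr.

(** I_{t+1} = I_t  ∪  N_t(I_t)  (sets of nodes as boolean predicates). *)
Definition flood_step (n : nat) (Rr eps : R) (I : nat -> bool) (c : config)
  : nat -> bool :=
  fun k => I k || existsb (fun j => I j && adj Rr eps c j k) (seq 0 n).

(** I_t for source s, given the configurations at times 0..t-1. *)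
Definition infected (n : nat) (Rr eps : R) (s : nat) (pre : list config)
  : nat -> bool :=
  fold_left (flood_step n Rr eps) pre (fun k => Nat.eqb k s).

Definition full (n : nat) (I : nat -> bool) : bool := forallb I (seq 0 n).

(** Event "flooding time >= tau" = exists source s such that
    I_t(s) <> [n] for every integer t >= 0 with t < tau.
    Here H is a horizon with tau < H. *)
Definition flood_ge (n : nat) (Rr eps : R) (H : nat) (tau : R)
  (traj : list config) : bool :=
  existsb (fun s =>
    forallb (fun t => if Rltb (INR t) tau
                      then negb (full n (infected n Rr eps s (firstn t traj)))
                      else true)
            (seq 0 (S H)))
    (seq 0 n).

Definition horizon (tau : R) : nat := Z.to_nat (up tau).

Definition prob_flooding_ge (n : nat) (r Rr eps tau : R) : R :=
  prob n r eps (horizon tau) (flood_ge n Rr eps (horizon tau) tau).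

(* Main.v *)
Require Import Defs.
From Stdlib Require Import Reals Lra Lia Psatz List Arith ZArith Bool Rgeom FinFun.
Import ListNotations.
Open Scope R_scope.

Lemma Rsum_cons (a : R) l : Rsum (a :: l) = a + Rsum l.
Proof. reflexivity. Qed.

Lemma Rsum_app l1 l2 : Rsum (l1 ++ l2) = Rsum l1 + Rsum l2.
Proof. induction l1; simpl; [lra|]. rewrite IHl1; lra. Qed.

Lemma Rsum_ext_in {A} (f g : A -> R) l :
  (forall x, In x l -> f x = g x) -> Rsum (map f l) = Rsum (map g l).
Proof. intros H; f_equal; apply map_ext_in; auto. Qed.

Lemma Rsum_le_in {A} (f g : A -> R) l :
  (forall x, In x l -> f x <= g x) -> Rsum (map f l) <= Rsum (map g l).
Proof.
  induction l; simpl; intros H; [lra|].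
  assert (f a <= g a) by auto. assert (Rsum (map f l) <= Rsum (map g l)) by auto. lra.
Qed.

Lemma Rsum_scal {A} (f : A -> R) k l :
  Rsum (map (fun x => k * f x) l) = k * Rsum (map f l).
Proof. induction l; simpl; [ring|]. rewrite IHl; ring. Qed.

Lemma Rsum_plus {A} (f g : A -> R) l :
  Rsum (map (fun x => f x + g x) l) = Rsum (map f l) + Rsum (map g l).
Proof. induction l; simpl; [ring|]. rewrite IHl; ring. Qed.

Lemma Rsum_minus {A} (f g : A -> R) l :
  Rsum (map (fun x => f x - g x) l) = Rsum (map f l) - Rsum (map g l).
Proof. induction l; simpl; [ring|]. rewrite IHl; ring. Qed.

Lemma Rsum_nonneg {A} (f : A -> R) l :
  (forall x, In x l -> 0 <= f x) -> 0 <= Rsum (map f l).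
Proof.
  intros H. replace 0 with (Rsum (map (fun _ : A => 0) l)).
  - apply Rsum_le_in; auto.
  - induction l; simpl; auto; rewrite IHl; [ring| intros; apply H; simpl; auto].
Qed.

Lemma Rsum_filter {A} (f : A -> R) (P : A -> bool) l :
  Rsum (map f (filter P l)) = Rsum (map (fun x => if P x then f x else 0) l).
Proof. induction l; simpl; auto. destruct (P a); simpl; rewrite IHl; ring. Qed.

Lemma Rsum_const_filter {A} (P : A -> bool) c l :
  Rsum (map (fun x => if P x then c else 0) l) = INR (length (filter P l)) * c.
Proof.
  induction l; simpl; [ring|]. destruct (P a); [cbn [filter length]|]; rewrite IHl; [|ring].
  rewrite S_INR; ring.
Qed.

Lemma Rsum_flat_map {A} (F : list A -> R) (M : list A) (L' : list (list A)) :
  Rsum (map F (flat_map (fun a => map (cons a) L') M)) =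
  Rsum (map (fun a => Rsum (map (fun r => F (a :: r)) L')) M).
Proof.
  induction M; simpl; auto. rewrite map_app, Rsum_app, IHM, map_map. reflexivity.
Qed.

Lemma Rprod_cons (a : R) l : Rprod (a :: l) = a * Rprod l.
Proof. reflexivity. Qed.

Lemma Rprod_nonneg {A} (f : A -> R) l :
  (forall x, In x l -> 0 <= f x) -> 0 <= Rprod (map f l).
Proof.
  induction l; simpl; intros H; [lra|]. apply Rmult_le_pos; auto.
Qed.

Lemma Rprod_nonzero {A} (f : A -> R) l x :
  Rprod (map f l) <> 0 -> In x l -> f x <> 0.
Proof.
  induction l; simpl; [tauto|]. intros H [->|Hi].
  - intro E; apply H; rewrite E; ring.
  - apply IHl; auto. intro E; apply H; rewrite E; ring.
Qed.

Lemma Rprod_mult {A} (f g : A -> R) l :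
  Rprod (map f l) * Rprod (map g l) = Rprod (map (fun x => f x * g x) l).
Proof. induction l; simpl; [ring|]. rewrite <- IHl; ring. Qed.

Lemma Rprod_const {A} (q : R) (l : list A) :
  Rprod (map (fun _ => q) l) = q ^ length l.
Proof. induction l; simpl; auto. rewrite IHl; ring. Qed.

Lemma Rprod_ind {A} (p : A -> bool) l :
  (if forallb p l then 1 else 0) = Rprod (map (fun i => if p i then 1 else 0) l).
Proof. induction l; simpl; auto. destruct (p a); simpl; [rewrite <- IHl|]; ring. Qed.

Lemma sum_prod (L : list point) : forall m (f : nat -> point -> R),
  Rsum (map (fun c => Rprod (map (fun i => f i (nth i c dpt)) (seq 0 m))) (all_lists L m))
  = Rprod (map (fun i => Rsum (map (f i) L)) (seq 0 m)).
Proof.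
  induction m; intros f.
  - simpl. ring.
  - cbn [all_lists]. rewrite Rsum_flat_map.
    transitivity (Rsum (map (fun a => f 0%nat a * Rprod (map (fun i => Rsum (map (f (S i)) L)) (seq 0 m))) L)).
    + apply Rsum_ext_in. intros a _.
      rewrite <- (IHm (fun i => f (S i))). rewrite <- Rsum_scal.
      apply Rsum_ext_in. intros r _. cbn [seq map Rprod nth].
      rewrite <- seq_shift, map_map. reflexivity.
    + cbn [seq map Rprod]. rewrite <- seq_shift, map_map.
      rewrite (Rsum_ext_in _ (fun a => Rprod (map (fun i => Rsum (map (f (S i)) L)) (seq 0 m)) * f 0%nat a)).
      2:{ intros; ring. }
      rewrite Rsum_scal. rewrite Rprod_cons. ring.
Qed.
Lemma pt_eqb_eq p q : pt_eqb p q = true <-> p = q.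
Proof.
  destruct p as [a b], q as [c d]; unfold pt_eqb; simpl.
  rewrite andb_true_iff, !Nat.eqb_eq. split; [intros [-> ->]; auto | intros H; inversion H; auto].
Qed.

Lemma existsb_pt_In y l : existsb (pt_eqb y) l = true <-> In y l.
Proof.
  rewrite existsb_exists. split.
  - intros [x [Hx E]]. apply pt_eqb_eq in E. subst; auto.
  - intros H; exists y; split; auto. apply pt_eqb_eq; auto.
Qed.

Lemma dist_euc_eq eps p q : dist_pt eps p q =
  dist_euc (INR (fst p) * eps) (INR (snd p) * eps) (INR (fst q) * eps) (INR (snd q) * eps).
Proof. unfold dist_pt, dist_euc, Rsqr. f_equal. ring. Qed.

Lemma dist_tri eps p q s : dist_pt eps p q <= dist_pt eps p s + dist_pt eps s q.
Proof. rewrite !dist_euc_eq. apply triangle. Qed.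

Lemma dist_sym eps p q : dist_pt eps p q = dist_pt eps q p.
Proof. rewrite !dist_euc_eq. apply distance_symm. Qed.

Lemma dist_refl eps p : dist_pt eps p p = 0.
Proof. rewrite !dist_euc_eq. apply distance_refl. Qed.

Lemma dist_ge_fst eps p q :
  Rabs (INR (fst p) * eps - INR (fst q) * eps) <= dist_pt eps p q.
Proof.
  unfold dist_pt. rewrite <- sqrt_Rsqr_abs. apply sqrt_le_1_alt.
  unfold Rsqr. set (u := _ - _). set (v := (INR (snd p) * eps - _)). assert (0 <= v^2) by (simpl; nra). simpl; lra.
Qed.

Lemma dist_mono eps a b a' b' x y x' y' :
  0 < eps -> Rabs (INR x - INR x') <= Rabs (INR a - INR a') ->
  Rabs (INR y - INR y') <= Rabs (INR b - INR b') ->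
  dist_pt eps (x, y) (x', y') <= dist_pt eps (a, b) (a', b').
Proof.
  intros He H1 H2. unfold dist_pt; simpl. apply sqrt_le_1_alt.
  assert (forall u v, Rabs u <= Rabs v -> u ^ 2 <= v ^ 2) as Sq.
  { intros u v Huv. rewrite <- (pow2_abs u), <- (pow2_abs v).
    apply pow_incr; split; [apply Rabs_pos|auto]. }
  apply Sq in H1; apply Sq in H2.
  replace ((INR x * eps - INR x' * eps) ^ 2) with ((INR x - INR x')^2 * eps^2) by ring.
  replace ((INR y * eps - INR y' * eps) ^ 2) with ((INR y - INR y')^2 * eps^2) by ring.
  replace ((INR a * eps - INR a' * eps) ^ 2) with ((INR a - INR a')^2 * eps^2) by ring.
  replace ((INR b * eps - INR b' * eps) ^ 2) with ((INR b - INR b')^2 * eps^2) by ring.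
  assert (0 <= eps ^ 2) by nra. nra.
Qed.

Lemma NoDup_prod {A B} (l : list A) (l' : list B) :
  NoDup l -> NoDup l' -> NoDup (list_prod l l').
Proof.
  induction l; simpl; intros H H'; [constructor|].
  inversion H; subst. apply NoDup_app; auto.
  - apply Injective_map_NoDup; auto. intros x y E; inversion E; auto.
  - intros [x y] Hx Hy. apply in_map_iff in Hx. destruct Hx as [z [E _]]. inversion E; subst.
    apply in_prod_iff in Hy. tauto.
Qed.

Lemma lattice_NoDup n eps : NoDup (lattice n eps).
Proof. unfold lattice. apply NoDup_prod; apply NoDup_filter, seq_NoDup. Qed.

Lemma lattice_K n eps : 0 < eps -> exists K : nat,
  (forall p, In p (lattice n eps) <-> (fst p <= K /\ snd p <= K)%nat) /\
  INR K > lat_bound n eps - 1.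
Proof.
  intros He. set (lb := lat_bound n eps).
  assert (Hlb : 0 <= lb). { unfold lb, lat_bound. unfold Rdiv; apply Rmult_le_pos; [apply sqrt_pos|left; apply Rinv_0_lt_compat; lra]. }
  destruct (archimed lb) as [A1 A2]. set (z := up lb) in *.
  assert (Hz : (1 <= z)%Z). { assert (0 < z)%Z by (apply lt_0_IZR; lra). lia. }
  assert (HK : INR (Z.to_nat z - 1) = IZR z - 1).
  { rewrite minus_INR by lia. rewrite INR_IZR_INZ, Z2Nat.id by lia. simpl; lra. }
  assert (Hiff : forall i, INR i <= lb <-> (i <= Z.to_nat z - 1)%nat).
  { intros i; split; intros Hi.
    - assert (Z.of_nat i < z)%Z. { apply lt_IZR. rewrite <- INR_IZR_INZ. lra. } lia.
    - apply le_INR in Hi. lra. }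
  exists (Z.to_nat z - 1)%nat. split; [|lra].
  intros [a b]. unfold lattice; cbv zeta. fold lb. simpl. fold z.
  assert (Hidx : forall i, In i (filter (fun i => Rleb (INR i) lb) (seq 0 (Z.to_nat z + 1))) <-> (i <= Z.to_nat z - 1)%nat).
  { intros i. rewrite filter_In, in_seq. unfold Rleb. destruct (Rle_dec (INR i) lb) as [Hi|Hi].
    - rewrite Hiff in Hi. split; intros; try split; try lia; auto.
    - rewrite Hiff in Hi. split; [intros [? ?]; discriminate | lia]. }
  split.
  - intros H. apply in_prod_iff in H. rewrite !Hidx in H. auto.
  - intros H. apply in_prod_iff. rewrite !Hidx. auto.
Qed.
Lemma Rsum_ones {A} (l : list A) : Rsum (map (fun _ => 1) l) = INR (length l).
Proof. induction l; simpl; [auto|]. rewrite IHl. destruct (length l); simpl; ring. Qed.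

Lemma In_Gamma n r eps x y :
  In y (Gamma n r eps x) <-> In y (lattice n eps) /\ dist_pt eps x y <= r.
Proof.
  unfold Gamma. rewrite filter_In. unfold Rleb.
  destruct (Rle_dec (dist_pt eps x y) r); split; intros [? ?]; auto; try discriminate; tauto.
Qed.

Lemma Gamma_self n r eps x : 0 <= r -> In x (lattice n eps) -> In x (Gamma n r eps x).
Proof. intros Hr H. apply In_Gamma. rewrite dist_refl. auto. Qed.

Lemma g_ge1 n r eps x : 0 <= r -> In x (lattice n eps) -> 1 <= INR (length (Gamma n r eps x)).
Proof.
  intros Hr H. apply Gamma_self with (r := r) in H; auto.
  destruct (Gamma n r eps x) eqn:E; [contradiction|]. simpl length. rewrite S_INR.
  assert (0 <= INR (length l)) by apply pos_INR. lra.
Qed.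

Definition Zsum n r eps := Rsum (map (fun y => INR (length (Gamma n r eps y))) (lattice n eps)).

Lemma lattice_00 n eps : 0 < eps -> In (0%nat, 0%nat) (lattice n eps).
Proof. intros He. destruct (lattice_K n eps He) as [K [HK _]]. apply HK. simpl; lia. Qed.

Lemma Zsum_pos n r eps : 0 <= r -> 0 < eps -> 0 < Zsum n r eps.
Proof.
  intros Hr He. unfold Zsum.
  assert (H0 := lattice_00 n eps He).
  assert (HL : forall y, In y (lattice n eps) -> 0 <= INR (length (Gamma n r eps y))) by (intros; apply pos_INR).
  destruct (in_split _ _ H0) as [l1 [l2 E]]. rewrite E, map_app, Rsum_app. cbn [map]. rewrite Rsum_cons.
  assert (1 <= INR (length (Gamma n r eps (0%nat, 0%nat)))) by (apply g_ge1; auto).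
  apply Rplus_le_lt_0_compat; [apply Rsum_nonneg; intros; apply pos_INR|].
  apply Rplus_lt_le_0_compat; [lra|apply Rsum_nonneg; intros; apply pos_INR].
Qed.

Lemma pi_eq n r eps x : pi_stat n r eps x = / Zsum n r eps * INR (length (Gamma n r eps x)).
Proof. unfold pi_stat, Zsum. unfold Rdiv. ring. Qed.

Lemma pi_sum n r eps : 0 <= r -> 0 < eps -> Rsum (map (pi_stat n r eps) (lattice n eps)) = 1.
Proof.
  intros Hr He. rewrite (Rsum_ext_in _ (fun x => / Zsum n r eps * INR (length (Gamma n r eps x)))).
  2:{ intros; apply pi_eq. }
  rewrite Rsum_scal. fold (Zsum n r eps). assert (H := Zsum_pos n r eps Hr He). field. lra.
Qed.

Lemma pi_nonneg n r eps x : 0 <= r -> 0 < eps -> 0 <= pi_stat n r eps x.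
Proof.
  intros Hr He. rewrite pi_eq. apply Rmult_le_pos; [|apply pos_INR].
  left; apply Rinv_0_lt_compat, Zsum_pos; auto.
Qed.

Lemma trans_nonneg n r eps x y : 0 <= trans n r eps x y.
Proof.
  unfold trans. destruct existsb; [|lra].
  destruct (length (Gamma n r eps x)) eqn:E; [simpl; rewrite Rinv_0; lra|].
  left; apply Rinv_0_lt_compat, lt_0_INR; lia.
Qed.

Lemma trans_nonzero n r eps x y : trans n r eps x y <> 0 -> dist_pt eps x y <= r.
Proof.
  unfold trans. destruct existsb eqn:E; [|lra]. intros _.
  apply existsb_pt_In, In_Gamma in E. tauto.
Qed.

Lemma trans_sum n r eps x : 0 <= r -> In x (lattice n eps) ->
  Rsum (map (trans n r eps x) (lattice n eps)) = 1.
Proof.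
  intros Hr Hx. unfold trans.
  rewrite (Rsum_ext_in _ (fun y => if Rleb (dist_pt eps x y) r then / INR (length (Gamma n r eps x)) else 0)).
  - rewrite Rsum_const_filter. fold (Gamma n r eps x).
    assert (H := g_ge1 n r eps x Hr Hx). field. lra.
  - intros y Hy. destruct (existsb (pt_eqb y) (Gamma n r eps x)) eqn:E.
    + apply existsb_pt_In, In_Gamma in E. unfold Rleb in *.
      destruct (Rle_dec (dist_pt eps x y) r); tauto.
    + unfold Rleb. destruct (Rle_dec (dist_pt eps x y) r); auto.
      exfalso. assert (In y (Gamma n r eps x)) by (apply In_Gamma; auto).
      apply existsb_pt_In in H. congruence.
Qed.

Lemma sum_sel_zero (c : point) (v : point -> R) l :
  ~ In c l -> Rsum (map (fun b => if pt_eqb c b then v b else 0) l) = 0.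
Proof.
  induction l; simpl; intros H; auto.
  destruct (pt_eqb c a) eqn:E.
  - apply pt_eqb_eq in E. subst. tauto.
  - rewrite IHl; auto. ring.
Qed.

Lemma sum_sel (c : point) (v : point -> R) l :
  NoDup l -> In c l -> Rsum (map (fun b => if pt_eqb c b then v b else 0) l) = v c.
Proof.
  induction l; simpl; intros Hn Hi; [contradiction|]. inversion Hn; subst.
  destruct (pt_eqb c a) eqn:E.
  - apply pt_eqb_eq in E. subst. rewrite sum_sel_zero; auto. ring.
  - destruct Hi as [<-|Hi]. { rewrite (proj2 (pt_eqb_eq a a)) in E; auto; discriminate. }
    rewrite IHl; auto. ring.
Qed.

Lemma fiber (l l' : list point) (f : point -> point) (w v : point -> R) (k : nat) :
  NoDup l -> NoDup l' -> (forall a, In a l -> In (f a) l') ->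
  (forall a, In a l -> w a <= v (f a)) -> (forall b, In b l' -> 0 <= v b) ->
  (forall b, (length (filter (fun a => pt_eqb (f a) b) l) <= k)%nat) ->
  Rsum (map w l) <= INR k * Rsum (map v l').
Proof.
  intros Hl Hl' Hf Hw Hv Hk.
  apply Rle_trans with (Rsum (map (fun a => v (f a)) l)); [apply Rsum_le_in; auto|].
  assert (E : Rsum (map (fun a => v (f a)) l) =
    Rsum (map (fun b => INR (length (filter (fun a => pt_eqb (f a) b) l)) * v b) l')).
  { clear Hl Hw Hk. induction l as [|a l IH]; simpl.
    - symmetry. rewrite (Rsum_ext_in _ (fun _ => 0 * 0)). rewrite Rsum_scal; ring.
      intros; simpl; ring.
    - rewrite IH by (intros; apply Hf; simpl; auto).
      rewrite <- (sum_sel (f a) v l') at 1 by (auto; apply Hf; simpl; auto).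
      rewrite <- Rsum_plus. apply Rsum_ext_in. intros b _.
      destruct (pt_eqb (f a) b); simpl length; [rewrite S_INR|]; ring. }
  rewrite E, <- Rsum_scal. apply Rsum_le_in. intros b Hb.
  apply Rmult_le_compat_r; auto. apply le_INR; auto.
Qed.

Lemma fiber_len (l : list point) (f : point -> point) b (F : list point) (k : nat) :
  NoDup l -> (length F <= k)%nat -> (forall a, In a l -> f a = b -> In a F) ->
  (length (filter (fun a => pt_eqb (f a) b) l) <= k)%nat.
Proof.
  intros Hl HF H. apply Nat.le_trans with (length F); auto.
  apply NoDup_incl_length. apply NoDup_filter; auto.
  intros a Ha. apply filter_In in Ha. destruct Ha as [Ha E]. apply pt_eqb_eq in E. auto.
Qed.
Lemma compress n r eps K (h : nat -> nat) (Sb : nat -> bool) :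
  0 <= r -> 0 < eps ->
  (forall p, In p (lattice n eps) <-> (fst p <= K /\ snd p <= K)%nat) ->
  (forall i, (i <= K)%nat -> (h i <= K)%nat) ->
  (forall i j, (i <= K)%nat -> (j <= K)%nat -> Rabs (INR (h i) - INR (h j)) <= Rabs (INR i - INR j)) ->
  (forall b, exists F : list nat, (length F <= 4)%nat /\ forall a, (a <= K)%nat -> h a = b -> In a F) ->
  (forall i, (i <= K)%nat -> Sb (h i) = true) ->
  / 16 <= Rsum (map (fun x => if Sb (fst x) then pi_stat n r eps x else 0) (lattice n eps)).
Proof.
  intros Hr He HL Hh Habs Hfibs HSb.
  set (L := lattice n eps) in *.
  set (g := fun x => INR (length (Gamma n r eps x))).
  set (psi := fun p : point => (h (fst p), snd p)).
  assert (HpsiL : forall p, In p L -> In (psi p) L).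
  { intros [a b] Hp. apply HL in Hp. apply HL. simpl in *. split; [apply Hh|]; tauto. }
  assert (Hdist : forall x y, In x L -> In y L -> dist_pt eps (psi x) (psi y) <= dist_pt eps x y).
  { intros [a b] [c d] Hx Hy. apply HL in Hx; apply HL in Hy; simpl in *.
    unfold psi; simpl. apply dist_mono; [auto | apply Habs; tauto | apply Rle_refl]. }
  assert (Hfib : forall l, NoDup l -> (forall a, In a l -> In a L) -> forall b,
             (length (filter (fun a => pt_eqb (psi a) b) l) <= 4)%nat).
  { intros l Hl Hin b. destruct (Hfibs (fst b)) as [F [HF HFa]].
    apply fiber_len with (F := map (fun i => (i, snd b)) F); auto.
    - rewrite length_map; auto.
    - intros [a1 a2] Ha E. apply Hin, HL in Ha. apply in_map_iff. exists a1.
      unfold psi in E; simpl in *. subst b. simpl. split; auto. apply HFa; tauto. }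
  assert (Hstep1 : forall x, In x L -> g x <= 4 * g (psi x)).
  { intros x Hx. unfold g. rewrite <- !Rsum_ones.
    replace 4 with (INR 4) by (simpl; ring).
    apply fiber with (f := psi).
    - apply NoDup_filter, lattice_NoDup.
    - apply NoDup_filter, lattice_NoDup.
    - intros a Ha. apply In_Gamma in Ha. apply In_Gamma. destruct Ha as [Ha Hd].
      split; [apply HpsiL; auto|]. eapply Rle_trans; [apply Hdist|]; eauto.
    - intros; lra.
    - intros; lra.
    - intros b. apply Hfib; [apply NoDup_filter, lattice_NoDup|].
      intros a Ha. apply In_Gamma in Ha; tauto. }
  assert (Hstep2 : Zsum n r eps <= INR 4 * Rsum (map (fun y => 4 * g y) (filter (fun x => Sb (fst x)) L))).
  { unfold Zsum. fold L. apply fiber with (f := psi).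
    - apply lattice_NoDup.
    - apply NoDup_filter, lattice_NoDup.
    - intros a Ha. apply filter_In. split; [apply HpsiL; auto|].
      apply HL in Ha. unfold psi; simpl. apply HSb. tauto.
    - intros a Ha. apply Hstep1; auto.
    - intros b _. unfold g. assert (0 <= INR (length (Gamma n r eps b))) by apply pos_INR. lra.
    - intros b. apply Hfib; auto. apply lattice_NoDup. }
  rewrite Rsum_scal, Rsum_filter in Hstep2.
  rewrite (Rsum_ext_in _ (fun x => / Zsum n r eps * (if Sb (fst x) then g x else 0))).
  2:{ intros x _. destruct (Sb (fst x)); [rewrite pi_eq; auto|ring]. }
  rewrite Rsum_scal. assert (HZ := Zsum_pos n r eps Hr He).
  simpl INR in Hstep2.
  apply Rmult_le_reg_l with (Zsum n r eps); auto.
  rewrite <- Rmult_assoc, Rinv_r by (apply Rgt_not_eq; lra).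
  match type of Hstep2 with _ <= _ * (4 * ?X) => match goal with |- _ <= 1 * ?Y => change Y with X end end. lra.
Qed.
Lemma div4 x : (4 * (x / 4) <= x < 4 * (x / 4) + 4)%nat.
Proof.
  pose proof (Nat.div_mod_eq x 4). pose proof (Nat.mod_upper_bound x 4). lia.
Qed.

Lemma abs_nat_mono (h : nat -> nat) K :
  (forall i j, (i <= j <= K)%nat -> (h i <= h j /\ h j - h i <= j - i)%nat) ->
  forall i j, (i <= K)%nat -> (j <= K)%nat -> Rabs (INR (h i) - INR (h j)) <= Rabs (INR i - INR j).
Proof.
  intros H.
  assert (W : forall i j, (i <= j <= K)%nat -> Rabs (INR (h i) - INR (h j)) <= Rabs (INR i - INR j)).
  { intros i j Hij. destruct (H i j Hij) as [H1 H2].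
    rewrite (Rabs_minus_sym (INR (h i))), (Rabs_minus_sym (INR i)).
    rewrite <- !minus_INR by lia. rewrite !Rabs_right by (apply Rle_ge, pos_INR).
    apply le_INR; auto. }
  intros i j Hi Hj. destruct (Nat.le_ge_cases i j).
  - apply W; lia.
  - rewrite (Rabs_minus_sym (INR (h i))), (Rabs_minus_sym (INR i)). apply W; lia.
Qed.

Lemma regions n r eps : 0 <= r -> 0 < eps -> exists K (Sb1 Sb2 : nat -> bool),
  (forall p, In p (lattice n eps) <-> (fst p <= K /\ snd p <= K)%nat) /\
  INR K > lat_bound n eps - 1 /\
  / 16 <= Rsum (map (fun x => if Sb1 (fst x) then pi_stat n r eps x else 0) (lattice n eps)) /\
  / 16 <= Rsum (map (fun x => if Sb2 (fst x) then pi_stat n r eps x else 0) (lattice n eps)) /\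
  (forall a b, (a <= K)%nat -> (b <= K)%nat -> Sb1 a = true -> Sb2 b = true -> (K + 2 * a <= 2 * b)%nat).
Proof.
  intros Hr He. destruct (lattice_K n eps He) as [K [HL HK]].
  exists K, (fun i => Nat.leb (4 * i) K), (fun i => Nat.leb (4 * (K - i)) K).
  split; [auto|]. split; [auto|]. split; [|split].
  - apply compress with (K := K) (h := fun i => (i / 4)%nat) (Sb := fun i => Nat.leb (4 * i) K); auto.
    + intros i Hi. pose proof (div4 i). lia.
    + apply abs_nat_mono. intros i j Hij. pose proof (div4 i). pose proof (div4 j). lia.
    + intros b. exists [4*b; 4*b+1; 4*b+2; 4*b+3]%nat. split; [simpl; lia|].
      intros a _ E. pose proof (div4 a). rewrite E in *. simpl.
      lia.
    + intros i Hi. apply Nat.leb_le. pose proof (div4 i). lia.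
  - apply compress with (K := K) (h := fun i => (K - (K - i) / 4)%nat) (Sb := fun i => Nat.leb (4 * (K - i)) K); auto.
    + intros i Hi. lia.
    + apply abs_nat_mono. intros i j Hij. pose proof (div4 (K - i)). pose proof (div4 (K - j)). lia.
    + intros b. exists [K - (4*(K-b)); K - (4*(K-b)+1); K - (4*(K-b)+2); K - (4*(K-b)+3)]%nat.
      split; [simpl; lia|].
      intros a Ha E. pose proof (div4 (K - a)). simpl.
      lia.
    + intros i Hi. apply Nat.leb_le. pose proof (div4 (K - i)). lia.
  - intros a b Ha Hb E1 E2. apply Nat.leb_le in E1, E2. lia.
Qed.
Lemma Rprod_ext_in {A} (f g : A -> R) l :
  (forall x, In x l -> f x = g x) -> Rprod (map f l) = Rprod (map g l).
Proof. intros H; f_equal; apply map_ext_in; auto. Qed.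

Lemma In_all_lists (L : list point) m c :
  In c (all_lists L m) -> forall i, (i < m)%nat -> In (nth i c dpt) L.
Proof.
  revert c; induction m; intros c Hc i Hi; [lia|].
  cbn [all_lists] in Hc. apply in_flat_map in Hc. destruct Hc as [a [Ha Hc]].
  apply in_map_iff in Hc. destruct Hc as [c' [<- Hc']].
  destruct i; simpl; auto. apply IHm; auto; lia.
Qed.

Lemma step_sum n r eps c : 0 <= r ->
  (forall i, (i < n)%nat -> In (nth i c dpt) (lattice n eps)) ->
  Rsum (map (step_weight n r eps c) (all_lists (lattice n eps) n)) = 1.
Proof.
  intros Hr Hc. unfold step_weight.
  pose proof (sum_prod (lattice n eps) n (fun i x => trans n r eps (nth i c dpt) x)) as SP.
  cbv beta in SP.
  transitivity (Rprod (map (fun i => Rsum (map (trans n r eps (nth i c dpt)) (lattice n eps))) (seq 0 n))).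
  { exact SP. }
  rewrite (Rprod_ext_in _ (fun _ => 1)).
  - rewrite Rprod_const, pow1; auto.
  - intros i Hi. apply in_seq in Hi. apply trans_sum; auto. apply Hc; lia.
Qed.

Lemma chain_sum n r eps : 0 <= r -> forall m c,
  (forall i, (i < n)%nat -> In (nth i c dpt) (lattice n eps)) ->
  Rsum (map (chain_weight n r eps c) (all_lists (all_lists (lattice n eps) n) m)) = 1.
Proof.
  intros Hr. induction m; intros c Hc.
  - simpl. unfold Rsum; simpl; ring.
  - cbn [all_lists]. rewrite Rsum_flat_map.
    rewrite (Rsum_ext_in _ (step_weight n r eps c)).
    + apply step_sum; auto.
    + intros c' Hc'. cbn [chain_weight].
      rewrite Rsum_scal, IHm; [ring|]. intros i Hi. eapply In_all_lists; eauto.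
Qed.

Lemma step_nonneg n r eps c c' : 0 <= step_weight n r eps c c'.
Proof. apply Rprod_nonneg. intros; apply trans_nonneg. Qed.

Lemma chain_nonneg n r eps rest : forall c, 0 <= chain_weight n r eps c rest.
Proof.
  induction rest; intros c; simpl; [lra|]. apply Rmult_le_pos; auto. apply step_nonneg.
Qed.

Lemma init_nonneg n r eps c : 0 <= r -> 0 < eps -> 0 <= init_weight n r eps c.
Proof. intros. apply Rprod_nonneg. intros; apply pi_nonneg; auto. Qed.

Definition ind (b : bool) : R := if b then 1 else 0.

Definition noneIn (n : nat) (pA : point -> bool) (c : config) : bool :=
  forallb (fun k => negb (pA (nth k c dpt))) (seq 0 n).

Lemma sum_init_ind n r eps (pA : point -> bool) :
  Rsum (map (fun c => init_weight n r eps c * ind (noneIn n pA c)) (all_lists (lattice n eps) n))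
  = (Rsum (map (fun x => if pA x then 0 else pi_stat n r eps x) (lattice n eps))) ^ n.
Proof.
  transitivity (Rprod (map (fun i => Rsum (map (fun x => pi_stat n r eps x * (if negb (pA x) then 1 else 0)) (lattice n eps))) (seq 0 n))).
  { etransitivity; [|exact (sum_prod (lattice n eps) n (fun i x => pi_stat n r eps x * (if negb (pA x) then 1 else 0)))].
    apply Rsum_ext_in. intros c _. unfold init_weight, ind, noneIn. rewrite Rprod_ind, Rprod_mult. reflexivity. }
  rewrite (Rprod_ext_in _ (fun _ => Rsum (map (fun x => if pA x then 0 else pi_stat n r eps x) (lattice n eps)))).
  + rewrite Rprod_const, length_seq; auto.
  + intros i _. apply Rsum_ext_in. intros x _. destruct (pA x); simpl; ring.
Qed.

Lemma sum_init n r eps : 0 <= r -> 0 < eps ->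
  Rsum (map (init_weight n r eps) (all_lists (lattice n eps) n)) = 1.
Proof.
  intros Hr He. unfold init_weight.
  pose proof (sum_prod (lattice n eps) n (fun i x => pi_stat n r eps x)) as SP.
  cbv beta in SP.
  transitivity (Rprod (map (fun i => Rsum (map (pi_stat n r eps) (lattice n eps))) (seq 0 n))).
  { exact SP. }
  rewrite (Rprod_ext_in _ (fun _ => 1)).
  - rewrite Rprod_const, pow1; auto.
  - intros; apply pi_sum; auto.
Qed.

Lemma prob_bound n r eps H' (E : list config -> bool) (pA pB : point -> bool) :
  0 <= r -> 0 < eps ->
  (forall c0 rest, In c0 (all_lists (lattice n eps) n) ->
     In rest (all_lists (all_lists (lattice n eps) n) H') ->
     traj_weight n r eps (c0 :: rest) <> 0 -> E (c0 :: rest) = false ->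
     noneIn n pA c0 = true \/ noneIn n pB c0 = true) ->
  prob n r eps (S H') E >=
  1 - (Rsum (map (fun x => if pA x then 0 else pi_stat n r eps x) (lattice n eps))) ^ n
    - (Rsum (map (fun x => if pB x then 0 else pi_stat n r eps x) (lattice n eps))) ^ n.
Proof.
  intros Hr He Hdet. unfold prob. rewrite Rsum_filter. cbn [all_lists]. rewrite Rsum_flat_map.
  set (M := all_lists (lattice n eps) n).
  set (Tr := all_lists M H').
  apply Rle_ge.
  apply Rle_trans with (Rsum (map (fun c0 => Rsum (map (fun rest =>
     (init_weight n r eps c0 * (1 - ind (noneIn n pA c0) - ind (noneIn n pB c0))) * chain_weight n r eps c0 rest) Tr)) M)).
  2:{ apply Rsum_le_in. intros c0 Hc0. apply Rsum_le_in. intros rest Hrest.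
      assert (Hw : 0 <= traj_weight n r eps (c0 :: rest)).
      { simpl. apply Rmult_le_pos; [apply init_nonneg; auto|apply chain_nonneg]. }
      assert (Weq : traj_weight n r eps (c0 :: rest) = init_weight n r eps c0 * chain_weight n r eps c0 rest) by reflexivity.
      assert (HiA : 0 <= ind (noneIn n pA c0) <= 1) by (unfold ind; destruct (noneIn n pA c0); lra).
      assert (HiB : 0 <= ind (noneIn n pB c0) <= 1) by (unfold ind; destruct (noneIn n pB c0); lra).
      destruct (E (c0 :: rest)) eqn:HE.
      - rewrite Weq in *. 
        replace (init_weight n r eps c0 * (1 - ind (noneIn n pA c0) - ind (noneIn n pB c0)) * chain_weight n r eps c0 rest)
          with (init_weight n r eps c0 * chain_weight n r eps c0 rest * (1 - ind (noneIn n pA c0) - ind (noneIn n pB c0))) by ring.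
        nra.
      - destruct (Req_dec (traj_weight n r eps (c0 :: rest)) 0) as [Z0|Z0].
        + rewrite Weq in Z0.
          replace (init_weight n r eps c0 * (1 - ind (noneIn n pA c0) - ind (noneIn n pB c0)) * chain_weight n r eps c0 rest)
            with (init_weight n r eps c0 * chain_weight n r eps c0 rest * (1 - ind (noneIn n pA c0) - ind (noneIn n pB c0))) by ring.
          rewrite Z0; lra.
        + destruct (Hdet c0 rest Hc0 Hrest Z0 HE) as [HA|HA]; rewrite Weq in *;
          replace (init_weight n r eps c0 * (1 - ind (noneIn n pA c0) - ind (noneIn n pB c0)) * chain_weight n r eps c0 rest)
            with (init_weight n r eps c0 * chain_weight n r eps c0 rest * (1 - ind (noneIn n pA c0) - ind (noneIn n pB c0))) by ring;
          rewrite HA in *; unfold ind at 1 in HiA; unfold ind at 1 in HiB; unfold ind; simpl;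
          nra. }
  rewrite (Rsum_ext_in _ (fun c0 => init_weight n r eps c0 - init_weight n r eps c0 * ind (noneIn n pA c0) - init_weight n r eps c0 * ind (noneIn n pB c0))).
  - rewrite !Rsum_minus. unfold M. rewrite sum_init, !sum_init_ind by auto. lra.
  - intros c0 Hc0. rewrite Rsum_scal. unfold Tr, M. rewrite chain_sum; auto; [ring|].
    intros i Hi. eapply In_all_lists; eauto.
Qed.
Lemma all_lists_length {A} (L : list A) m c : In c (all_lists L m) -> length c = m.
Proof.
  revert c; induction m; intros c Hc.
  - simpl in Hc. destruct Hc as [<-|[]]; auto.
  - cbn [all_lists] in Hc. apply in_flat_map in Hc. destruct Hc as [a [_ Hc]].
    apply in_map_iff in Hc. destruct Hc as [c' [<- Hc']]. simpl; f_equal; auto.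
Qed.

Lemma forallb_false {A} (f : A -> bool) l : forallb f l = false -> exists x, In x l /\ f x = false.
Proof.
  induction l; simpl; [discriminate|]. destruct (f a) eqn:E; simpl; intros H.
  - destruct (IHl H) as [x [Hx Ex]]; eauto.
  - eauto.
Qed.

Lemma chain_steps n r eps : forall rest c, chain_weight n r eps c rest <> 0 ->
  forall t k, (S t < length (c :: rest))%nat -> (k < n)%nat ->
  dist_pt eps (nth k (nth t (c :: rest) []) dpt) (nth k (nth (S t) (c :: rest) []) dpt) <= r.
Proof.
  induction rest as [|a rest IH]; intros c Hc t k Ht Hk; simpl in Ht; [lia|].
  cbn [chain_weight] in Hc.
  assert (H1 : step_weight n r eps c a <> 0) by (intro E; apply Hc; rewrite E; ring).
  assert (H2 : chain_weight n r eps a rest <> 0) by (intro E; apply Hc; rewrite E; ring).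
  destruct t.
  - simpl. apply trans_nonzero with (n := n).
    unfold step_weight in H1. apply (Rprod_nonzero (fun i => trans n r eps (nth i c dpt) (nth i a dpt)) (seq 0 n) k H1).
    apply in_seq; lia.
  - change (nth (S t) (c :: a :: rest) []) with (nth t (a :: rest) []).
    change (nth (S (S t)) (c :: a :: rest) []) with (nth (S t) (a :: rest) []).
    apply IH; auto. simpl; lia.
Qed.

Lemma firstn_snoc {A} (l : list A) t d : (t < length l)%nat ->
  firstn (S t) l = firstn t l ++ [nth t l d].
Proof.
  revert t; induction l; intros t Ht; simpl in Ht; [lia|].
  destruct t; simpl; auto. f_equal. rewrite <- IHl by lia. reflexivity.
Qed.

Lemma infected_step n Rr eps s traj t : (t < length traj)%nat ->
  infected n Rr eps s (firstn (S t) traj) =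
  flood_step n Rr eps (infected n Rr eps s (firstn t traj)) (nth t traj []).
Proof.
  intros Ht. unfold infected. rewrite (firstn_snoc traj t []) by auto.
  rewrite fold_left_app. reflexivity.
Qed.

Section Det.
Variables (n : nat) (r Rr eps : R) (traj : list config) (s : nat).
Hypothesis Hr : 0 <= r.
Hypothesis HR : 0 <= Rr.
Hypothesis Hs : (s < n)%nat.
Hypothesis Hsteps : forall t k, (S t < length traj)%nat -> (k < n)%nat ->
  dist_pt eps (nth k (nth t traj []) dpt) (nth k (nth (S t) traj []) dpt) <= r.

Lemma spread : forall t, (t < length traj)%nat -> forall k, (k < n)%nat ->
  infected n Rr eps s (firstn t traj) k = true ->
  dist_pt eps (nth s (nth 0 traj []) dpt) (nth k (nth t traj []) dpt) <= INR t * (Rr + r).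
Proof.
  induction t; intros Ht k Hk HI.
  - simpl in HI. unfold infected in HI. simpl in HI. apply Nat.eqb_eq in HI. subst.
    rewrite dist_refl. simpl; lra.
  - rewrite infected_step in HI by lia. unfold flood_step in HI.
    apply orb_true_iff in HI. rewrite S_INR.
    destruct HI as [HI|HI].
    + pose proof (IHt ltac:(lia) k Hk HI).
      pose proof (Hsteps t k Ht Hk).
      pose proof (dist_tri eps (nth s (nth 0 traj []) dpt) (nth k (nth (S t) traj []) dpt) (nth k (nth t traj []) dpt)).
      nra.
    + apply existsb_exists in HI. destruct HI as [j [Hj HI]].
      apply in_seq in Hj. apply andb_true_iff in HI. destruct HI as [HIj Hadj].
      pose proof (IHt ltac:(lia) j ltac:(lia) HIj).
      unfold adj, Rleb in Hadj. destruct Rle_dec as [Hd|]; [|discriminate].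
      pose proof (Hsteps t k Ht Hk).
      pose proof (dist_tri eps (nth s (nth 0 traj []) dpt) (nth k (nth (S t) traj []) dpt) (nth j (nth t traj []) dpt)).
      pose proof (dist_tri eps (nth j (nth t traj []) dpt) (nth k (nth (S t) traj []) dpt) (nth k (nth t traj []) dpt)).
      nra.
Qed.

Lemma move : forall t, (t < length traj)%nat -> forall k, (k < n)%nat ->
  dist_pt eps (nth k (nth 0 traj []) dpt) (nth k (nth t traj []) dpt) <= INR t * r.
Proof.
  induction t; intros Ht k Hk.
  - rewrite dist_refl. simpl; lra.
  - rewrite S_INR. pose proof (IHt ltac:(lia) k Hk). pose proof (Hsteps t k Ht Hk).
    pose proof (dist_tri eps (nth k (nth 0 traj []) dpt) (nth k (nth (S t) traj []) dpt) (nth k (nth t traj []) dpt)).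
    nra.
Qed.
End Det.

Lemma bern x m : 0 <= x -> 1 + INR m * x + INR m * (INR m - 1) / 2 * x ^ 2 <= (1 + x) ^ m.
Proof.
  intros Hx. induction m.
  - simpl; lra.
  - rewrite S_INR. simpl pow. assert (0 <= INR m) by apply pos_INR.
    assert (0 <= x^2) by nra.
    apply Rle_trans with ((1 + x) * (1 + INR m * x + INR m * (INR m - 1) / 2 * x ^ 2)).
    + assert (0 <= INR m * (INR m - 1)).
      { destruct m; [simpl; lra|]. rewrite S_INR. assert (0 <= INR m) by apply pos_INR. nra. }
      assert (0 <= INR m * (INR m - 1) * x ^ 3) by (apply Rmult_le_pos; [auto|apply pow_le; lra]).
      simpl pow in *. nra.
    + apply Rmult_le_compat_l; lra.
Qed.

Lemma pow_bound m : (901 <= m)%nat -> 2 * (15 / 16) ^ m <= 1 / INR m.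
Proof.
  intros Hm. apply le_INR in Hm. replace (INR 901) with 901 in Hm by (simpl; lra).
  pose proof (bern (1/15) m ltac:(lra)) as B.
  replace (1 + 1/15) with (16/15) in B by field.
  set (y := (16/15) ^ m) in *.
  assert (Hy : (15/16) ^ m * y = 1).
  { unfold y. rewrite <- Rpow_mult_distr. replace (15/16 * (16/15)) with 1 by field. apply pow1. }
  assert (Hy2 : 2 * INR m <= y).
  { eapply Rle_trans; [|exact B]. assert (0 <= INR m) by lra. nra. }
  assert (0 < y) by lra.
  assert (0 <= (15/16)^m) by (apply pow_le; lra).
  apply Rmult_le_reg_r with (INR m * y); [nra|].
  replace (1 / INR m * (INR m * y)) with y by (field; lra).
  replace (2 * (15 / 16) ^ m * (INR m * y)) with (2 * INR m * ((15/16)^m * y)) by ring.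
  rewrite Hy. lra.
Qed.
Theorem mainTheorem9 :
  exists c : R, 0 < c /\
  exists N : nat, forall n : nat, (N <= n)%nat ->
  forall r eps Rr : R, 0 <= r -> 0 < eps <= 1 -> eps < Rr ->
    prob_flooding_ge n r Rr eps (c * sqrt (INR n) / (Rr + r)) >= 1 - 1 / INR n.
Proof.
  exists (1/32). split; [lra|]. exists 901%nat. intros n Hn r eps Rr Hr [He He1] HeR.
  assert (HnR : 901 <= INR n) by (apply le_INR in Hn; simpl in Hn; lra).
  assert (Hsq1 : 1 <= sqrt (INR n)) by (rewrite <- sqrt_1; apply sqrt_le_1_alt; lra).
  set (tau := 1 / 32 * sqrt (INR n) / (Rr + r)).
  assert (Htau : 0 < tau) by (unfold tau; apply Rdiv_lt_0_compat; lra).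
  destruct (archimed tau) as [U1 U2].
  assert (Hup : (1 <= up tau)%Z) by (assert (0 < up tau)%Z by (apply lt_0_IZR; lra); lia).
  destruct (horizon tau) as [|H'] eqn:HH.
  { unfold horizon in HH. lia. }
  destruct (regions n r eps Hr He) as [K [Sb1 [Sb2 [HL [HK [HA [HB Hap]]]]]]].
  unfold prob_flooding_ge. fold tau. rewrite HH.
  eapply Rge_trans.
  - apply (prob_bound n r eps H' _ (fun x => Sb1 (fst x)) (fun x => Sb2 (fst x)) Hr He).
    intros c0 rest Hc0 Hrest Hw HE.
    set (traj := c0 :: rest).
    assert (Hlen : length traj = S H') by (simpl; f_equal; eapply all_lists_length; eauto).
    assert (Hch : chain_weight n r eps c0 rest <> 0).
    { intro E; apply Hw. simpl. rewrite E; ring. }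
    pose proof (chain_steps n r eps rest c0 Hch) as Hsteps. fold traj in Hsteps.
    unfold flood_ge in HE.
    assert (Hs0 : (0 < n)%nat) by lia.
    assert (HF0 : forallb (fun t => if Rltb (INR t) tau then negb (full n (infected n Rr eps 0 (firstn t traj))) else true) (seq 0 (S (S H'))) = false).
    { destruct (forallb _ _) eqn:E; auto. exfalso.
      assert (X : true = false); [|discriminate]. rewrite <- HE. symmetry.
      apply existsb_exists. exists 0%nat. split; [apply in_seq; lia|]. exact E. }
    apply forallb_false in HF0. destruct HF0 as [t [_ Ht]].
    unfold Rltb in Ht. destruct (Rlt_dec (INR t) tau) as [Htl|]; [|discriminate].
    apply negb_false_iff in Ht.
    assert (HtH : (t < S H')%nat).
    { assert (Z.of_nat t < up tau)%Z by (apply lt_IZR; rewrite <- INR_IZR_INZ; lra).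
      unfold horizon in HH. lia. }
    assert (Hall : forall k, (k < n)%nat -> dist_pt eps (nth 0 c0 dpt) (nth k c0 dpt) < 2 * (1/32) * sqrt (INR n)).
    { intros k Hk.
      assert (Htl2 : (t < length traj)%nat) by (rewrite Hlen; exact HtH).
      assert (HI : infected n Rr eps 0 (firstn t traj) k = true).
      { unfold full in Ht. rewrite forallb_forall in Ht. apply Ht, in_seq; lia. }
      pose proof (spread n r Rr eps traj 0 ltac:(lra) Hs0 Hsteps t Htl2 k Hk HI) as S1.
      pose proof (move n r eps traj k Hk Hsteps t Htl2 k Hk) as S2.
      simpl nth at 1 in S1. simpl nth at 1 in S2.
      pose proof (dist_tri eps (nth 0 c0 dpt) (nth k c0 dpt) (nth k (@nth config t traj []) dpt)) as T1.
      rewrite (dist_sym eps (nth k (@nth config t traj []) dpt)) in T1.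
      assert (0 <= INR t) by apply pos_INR.
      assert (INR t * (Rr + r) + INR t * r <= INR t * (2 * (Rr + r))) by nra.
      assert (INR t * (2 * (Rr + r)) < tau * (2 * (Rr + r))) by (apply Rmult_lt_compat_r; lra).
      assert (tau * (2 * (Rr + r)) = 2 * (1/32) * sqrt (INR n)) by (unfold tau; field; lra).
      lra. }
    destruct (noneIn n (fun x => Sb1 (fst x)) c0) eqn:EA; auto.
    destruct (noneIn n (fun x => Sb2 (fst x)) c0) eqn:EB; auto. exfalso.
    apply forallb_false in EA. destruct EA as [k1 [Hk1 E1]]. apply negb_false_iff in E1.
    apply forallb_false in EB. destruct EB as [k2 [Hk2 E2]]. apply negb_false_iff in E2.
    apply in_seq in Hk1; apply in_seq in Hk2.
    assert (L1 := In_all_lists _ _ _ Hc0 k1 ltac:(lia)). apply HL in L1.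
    assert (L2 := In_all_lists _ _ _ Hc0 k2 ltac:(lia)). apply HL in L2.
    pose proof (Hap _ _ (proj1 L1) (proj1 L2) E1 E2) as Hab.
    apply le_INR in Hab. rewrite plus_INR, !mult_INR in Hab. simpl INR in Hab.
    pose proof (dist_ge_fst eps (nth k1 c0 dpt) (nth k2 c0 dpt)) as D1.
    pose proof (Hall k1 ltac:(lia)). pose proof (Hall k2 ltac:(lia)).
    pose proof (dist_tri eps (nth k1 c0 dpt) (nth k2 c0 dpt) (nth 0 c0 dpt)) as T1.
    rewrite (dist_sym eps (nth k1 c0 dpt) (nth 0 c0 dpt)) in T1.
    assert (Hlbe : lat_bound n eps * eps = sqrt (INR n)) by (unfold lat_bound; field; lra).
    set (a := INR (fst (nth k1 c0 dpt))) in *. set (b := INR (fst (nth k2 c0 dpt))) in *.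
    rewrite Rabs_minus_sym, Rabs_right in D1 by nra.
    assert (INR K * eps > sqrt (INR n) - eps) by nra.
    assert (b * eps - a * eps >= INR K * eps / 2) by nra.
    assert (Hsq2 : 2 <= sqrt (INR n)).
    { replace 2 with (sqrt 4). apply sqrt_le_1_alt; lra. replace 4 with (2*2) by ring. rewrite sqrt_square; lra. }
    lra.
  - assert (Hq : forall Sb : nat -> bool,
      / 16 <= Rsum (map (fun x => if Sb (fst x) then pi_stat n r eps x else 0) (lattice n eps)) ->
      0 <= Rsum (map (fun x => if Sb (fst x) then 0 else pi_stat n r eps x) (lattice n eps)) <= 15/16).
    { intros Sb HSb. split.
      - apply Rsum_nonneg. intros x _. destruct (Sb (fst x)); [lra|apply pi_nonneg; auto].
      - pose proof (pi_sum n r eps Hr He) as Ps.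
        rewrite (Rsum_ext_in _ (fun x => (if Sb (fst x) then pi_stat n r eps x else 0) + (if Sb (fst x) then 0 else pi_stat n r eps x))) in Ps.
        + rewrite Rsum_plus in Ps. lra.
        + intros x _. destruct (Sb (fst x)); ring. }
    destruct (Hq Sb1 HA) as [qa1 qa2]. destruct (Hq Sb2 HB) as [qb1 qb2].
    pose proof (pow_bound n Hn).
    assert (Rsum (map (fun x : point => if Sb1 (fst x) then 0 else pi_stat n r eps x) (lattice n eps)) ^ n <= (15/16)^n)
      by (apply pow_incr; split; assumption).
    assert (Rsum (map (fun x : point => if Sb2 (fst x) then 0 else pi_stat n r eps x) (lattice n eps)) ^ n <= (15/16)^n)
      by (apply pow_incr; split; assumption).
    cbv beta. lra.
Qed.
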